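(* There is a constant $C>0$ such that for all $n\ge 2$ and $k\ge1$: if $\mathbf M\in\mathrm{GL}(n,2)$ equals a product $\mathbf M_{\mathcal T_k}\cdots\mathbf M_{\mathcal T_1}$ of $k$ CNOT-tree matrices, each on $n$ qubits, then $\mathbf M$ is a product of at most $Ck\log^2 n$ parallel row-elimination matrices. That is, the circuit can be parallelized to depth $O(k\log^2 n)$ without ancillae.
   Context: $\mathsf R(i,j)=\mathbf I+\mathbf 1_{j,i}$ over $\mathbb F_2$, where $\mathbf 1_{j,i}$ is the matrix with a single $1$ in entry $(j,i)$. A parallel row-elimination matrix is $\mathbf I$ or $\mathbf I+\sum_{k=1}^t\mathbf 1_{j_k,i_k}$, where the $2t$ indices $i_k,j_k$ are pairwise distinct. A CNOT-tree matrix $\mathbf M_{\mathcal T}$ is defined for a proper binary tree $\mathcal T$ with $n$ leaves carrying distinct labels from $[n]$ and internal nodes labeled $L$ or $R$. Each node $v$ receives a qubit index $i(v)$, and each internal node $v$ a matrix $\mathbf M_v$, as follows. Write $c_L,c_R$ for the left and right children of $v$. - If $v$ is a leaf, $i(v)$ is its label. - If $v$ is internal with label $L$, then $i(v)=i(c_L)$ and $\mathbf M_v=\mathsf R(i(c_R),i(c_L))$. - If $v$ is internal with label $R$, then $i(v)=i(c_R)$ and $\mathbf M_v=\mathsf R(i(c_L),i(c_R))$. Then $\mathbf M_{\mathcal T}=\mathbf M_{v_{n-1}}\cdots\mathbf M_{v_1}$, where $v_1,\dots,v_{n-1}$ are the internal nodes in postorder. *)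

(* Defs.v *)
From HB Require Import structures.
From mathcomp Require Import all_boot all_order all_algebra.
From Stdlib Require Import Reals.

Set Implicit Arguments.
Unset Strict Implicit.
Unset Printing Implicit Defensive.

Import GRing.Theory.
Local Open Scope ring_scope.

Inductive lr := LabL | LabR.

Inductive tree (n : nat) :=
  | Leaf of 'I_n
  | Node of lr & tree n & tree n.

Arguments Leaf {n}.
Arguments Node {n}.

Fixpoint leaves n (t : tree n) : seq 'I_n :=
  match t with
  | Leaf l => [:: l]
  | Node _ a b => leaves a ++ leaves b
  end.

Definition valid_tree n (t : tree n) : bool :=
  (size (leaves t) == n) && uniq (leaves t).

Definition Rmx n (i j : 'I_n) : 'M['F_2]_n := 1%:M + delta_mx j i.

Fixpoint qidx n (t : tree n) : 'I_n :=
  match t with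
  | Leaf l => l
  | Node LabL a _ => qidx a
  | Node LabR _ b => qidx b
  end.

(* M_T = M_{v_{n-1}} ... M_{v_1}, internal nodes in postorder
   (left subtree, right subtree, root), so M_{Node} = M_v * M_right * M_left. *)
Fixpoint tree_mx n (t : tree n) : 'M['F_2]_n :=
  match t with
  | Leaf _ => 1%:M
  | Node LabL a b => Rmx (qidx b) (qidx a) *m tree_mx b *m tree_mx a
  | Node LabR a b => Rmx (qidx a) (qidx b) *m tree_mx b *m tree_mx a
  end.

(* Parallel row-elimination matrix: I + sum_k 1_{j_k,i_k} with all 2t indices
   pairwise distinct (t = 0 gives I).  A pair p encodes (i_k, j_k) = (p.1, p.2). *)
Definition parallel_elim n (A : 'M['F_2]_n) : Prop :=
  exists s : seq ('I_n * 'I_n),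
    uniq (flatten [seq [:: p.1; p.2] | p <- s]) /\
    A = 1%:M + \sum_(p <- s) delta_mx p.2 p.1.

Definition mxprod n (s : seq 'M['F_2]_n) : 'M['F_2]_n := foldr mulmx 1%:M s.

(* Main.v *)
Require Import Defs.
From HB Require Import structures.
From mathcomp Require Import all_boot all_order all_algebra.
From mathcomp Require Import zify ring.
Set Implicit Arguments.
Unset Strict Implicit.
Unset Printing Implicit Defensive.
Import GRing.Theory.
Local Open Scope ring_scope.


Lemma F2_addxx (a : 'F_2) : a + a = 0.
Proof. by rewrite -{2}(oppr_pchar2 (pchar_Fp (isT : prime 2)) a) subrr. Qed.

Definition vec n := {ffun 'I_n -> 'F_2}.
Definition gate n := ('I_n * 'I_n)%type.

Definition LS {n} (L : seq (gate n)) (x : vec n) : vec n :=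
  [ffun q => x q + \sum_(g <- L | g.2 == q) x g.1].

Definition eps {n} (L : seq (gate n)) : seq 'I_n :=
  flatten [seq [:: p.1; p.2] | p <- L].

Definition sem {n} (C : seq (seq (gate n))) (x : vec n) : vec n :=
  foldl (fun y L => LS L y) x C.

Definition ceps {n} (C : seq (seq (gate n))) : seq 'I_n := flatten (map eps C).

Definition validc {n} (C : seq (seq (gate n))) := all (fun L => uniq (eps L)) C.

Definition supp_on {n} (f : vec n -> vec n) (S : seq 'I_n) :=
  (forall (x : vec n) q, q \notin S -> f x q = x q) /\
  (forall x y : vec n, (forall q, q \in S -> x q = y q) -> forall q, q \in S -> f x q = f y q).

Definition disj {n} (S1 S2 : seq 'I_n) := forall q, q \in S1 -> q \notin S2.

Lemma supp_comm n (f g : vec n -> vec n) S1 S2 x :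
  supp_on f S1 -> supp_on g S2 -> disj S1 S2 -> f (g x) = g (f x).
Proof.
move=> [f1 f2] [g1 g2] D; apply/ffunP => q.
case: (boolP (q \in S1)) => q1.
  rewrite (g1 _ _ (D _ q1)).
  apply: f2 => // r r1; exact: g1 (D _ r1).
case: (boolP (q \in S2)) => q2.
  rewrite (f1 _ _ q1); apply: g2 => // r r2; symmetry; apply: f1.
  by apply/negP => /D; rewrite r2.
by rewrite (f1 _ _ q1) (g1 _ _ q2) (g1 _ _ q2) (f1 _ _ q1).
Qed.

Lemma supp_mono n (f : vec n -> vec n) S S' :
  supp_on f S -> {subset S <= S'} -> supp_on f S'.
Proof.
move=> [f1 f2] sub; split.
  move=> x q qn; apply: f1; apply/negP => /sub; by rewrite (negbTE qn).
move=> x y e q q'; case: (boolP (q \in S)) => qS.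
  apply: f2 => // r rS; apply: e; exact: sub.
by rewrite !f1 // e.
Qed.

Lemma supp_comp n (f g : vec n -> vec n) S :
  supp_on f S -> supp_on g S -> supp_on (fun x => f (g x)) S.
Proof.
move=> [f1 f2] [g1 g2]; split.
  by move=> x q qn; rewrite f1 // g1.
move=> x y e q qS; apply: f2 => // r rS; exact: g2.
Qed.

Lemma supp_id n S : supp_on (fun x : vec n => x) S.
Proof. by split => // x y e q; apply: e. Qed.

Lemma eps_cons n (p : gate n) L : eps (p :: L) = p.1 :: p.2 :: eps L.
Proof. by []. Qed.

Lemma eps_cat n (L1 L2 : seq (gate n)) : eps (L1 ++ L2) = eps L1 ++ eps L2.
Proof. by rewrite /eps map_cat flatten_cat. Qed.

Lemma mem_eps n (L : seq (gate n)) g : g \in L -> (g.1 \in eps L) && (g.2 \in eps L).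
Proof.
elim: L => //= p L IH; rewrite inE => /orP [/eqP -> | /IH /andP [h1 h2]].
  by rewrite eps_cons !inE !eqxx orbT.
by rewrite eps_cons !inE h1 h2 !orbT.
Qed.

Lemma LS_supp n (L : seq (gate n)) : supp_on (LS L) (eps L).
Proof.
split.
  move=> x q qn; rewrite ffunE big_seq_cond big1 ?addr0 // => g /andP [gL /eqP e].
  by move: qn; rewrite -e; case/andP: (mem_eps gL) => _ ->.
move=> x y e q qS; rewrite !ffunE e //; congr (_ + _).
rewrite big_seq_cond [in RHS]big_seq_cond; apply: eq_bigr => g /andP [gL _].
by apply: e; case/andP: (mem_eps gL).
Qed.

Lemma sem_cons n L (C : seq (seq (gate n))) x : sem (L :: C) x = sem C (LS L x).
Proof. by []. Qed.

Lemma sem_cat n (C1 C2 : seq (seq (gate n))) x : sem (C1 ++ C2) x = sem C2 (sem C1 x).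
Proof. by rewrite /sem foldl_cat. Qed.

Lemma sem_supp n (C : seq (seq (gate n))) : supp_on (sem C) (ceps C).
Proof.
elim: C => [|L C IH]; first exact: supp_id.
apply: (@supp_comp _ (sem C) (LS L)).
  apply: supp_mono IH _ => q; rewrite /ceps /= mem_cat => ->; by rewrite orbT.
apply: supp_mono (LS_supp L) _ => q; rewrite /ceps /= mem_cat => ->; by [].
Qed.

Lemma LS_cat n (a b : seq (gate n)) x : disj (eps a) (eps b) ->
  LS (a ++ b) x = LS b (LS a x).
Proof.
move=> D; apply/ffunP => q; rewrite !ffunE big_cat /= addrA; congr (_ + _).
rewrite big_seq_cond [in RHS]big_seq_cond; apply: eq_bigr => g /andP [gb _].
case/andP: (mem_eps gb) => g1 _.
case: (LS_supp a) => h _; rewrite h //.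
apply/negP => /D; by rewrite g1.
Qed.

Fixpoint zipc {n} (A B : seq (seq (gate n))) :=
  match A, B with
  | a :: A', b :: B' => (a ++ b) :: zipc A' B'
  | [::], _ => B
  | _, [::] => A
  end.

Lemma zipc_nil n (A : seq (seq (gate n))) : zipc A [::] = A.
Proof. by case: A. Qed.

Lemma size_zipc n (A B : seq (seq (gate n))) : size (zipc A B) = maxn (size A) (size B).
Proof.
elim: A B => [|a A IH] [|b B] //=; rewrite ?maxn0 ?max0n //.
by rewrite IH maxnSS.
Qed.

Lemma ceps_zipc n (A B : seq (seq (gate n))) q :
  (q \in ceps (zipc A B)) = (q \in ceps A) || (q \in ceps B).
Proof.
elim: A B => [|a A IH] [|b B] //=; rewrite ?orbF //.
rewrite /ceps /= !mem_cat eps_cat mem_cat -/(ceps _) IH /ceps.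
by case: (q \in eps a); case: (q \in eps b); rewrite /= ?orbT ?orbF.
Qed.

Lemma disj_consl n (a : seq 'I_n) A B : disj (a ++ A) B -> disj a B /\ disj A B.
Proof. by move=> D; split => q qa; apply: D; rewrite mem_cat qa ?orbT. Qed.

Lemma disj_consr n (A : seq 'I_n) b B : disj A (b ++ B) -> disj A b /\ disj A B.
Proof.
move=> D; split => q qa; move: (D q qa); rewrite mem_cat negb_or; by case/andP.
Qed.

Lemma zipc_sem n (A B : seq (seq (gate n))) x : disj (ceps A) (ceps B) ->
  sem (zipc A B) x = sem B (sem A x).
Proof.
elim: A B x => [|a A IH] [|b B] x //= D.
rewrite /ceps /= in D; case/disj_consl: D => D1 D2.
case/disj_consr: D1 => Dab DaB; case/disj_consr: D2 => DAb DAB.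
rewrite LS_cat // IH //.
congr (sem B _).
rewrite (@supp_comm _ (sem A) (LS b) (ceps A) (eps b)) //.
- exact: sem_supp.
- exact: LS_supp.
Qed.

Lemma zipc_valid n (A B : seq (seq (gate n))) : validc A -> validc B ->
  disj (ceps A) (ceps B) -> validc (zipc A B).
Proof.
elim: A B => [|a A IH] [|b B] //= /andP [ua vA] /andP [ub vB] D.
rewrite /ceps /= in D; case/disj_consl: D => D1 D2.
case/disj_consr: D1 => Dab DaB; case/disj_consr: D2 => DAb DAB.
rewrite IH // andbT eps_cat cat_uniq ua ub /= andbT.
apply/hasPn => q qb; apply/negP => qa; by move: (Dab q qa); rewrite qb.
Qed.


Lemma ceps_cons n (L : seq (gate n)) C : ceps (L :: C) = eps L ++ ceps C.
Proof. by []. Qed.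
Lemma ceps_cat n (C1 C2 : seq (seq (gate n))) : ceps (C1 ++ C2) = ceps C1 ++ ceps C2.
Proof. by rewrite /ceps map_cat flatten_cat. Qed.
Lemma ceps1 n (L : seq (gate n)) : ceps [:: L] = eps L.
Proof. by rewrite /ceps /= cats0. Qed.

Lemma src_not_tgt n (L : seq (gate n)) g g' : uniq (eps L) -> g \in L -> g' \in L -> g.1 != g'.2.
Proof.
elim: L => // p L IH; rewrite eps_cons /= !inE => /and3P [/norP [p12 p1L] p2L uL].
move=> /orP [/eqP -> | gL] /orP [/eqP -> | g'L] //.
- apply/eqP => e; move: p1L; rewrite e; by case/andP: (mem_eps g'L) => _ ->.
- apply/eqP => e; move: p2L; rewrite -e; by case/andP: (mem_eps gL) => ->.
- exact: IH.
Qed.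

Lemma LS_invol n (L : seq (gate n)) x : uniq (eps L) -> LS L (LS L x) = x.
Proof.
move=> u; apply/ffunP => q; rewrite !ffunE -addrA; set S := \sum_(_ <- _ | _) _.
rewrite (_ : \sum_(g <- L | g.2 == q) LS L x g.1 = S) ?F2_addxx ?addr0 //.
rewrite /S big_seq_cond [in RHS]big_seq_cond; apply: eq_bigr => g /andP [gL _].
rewrite ffunE big_seq_cond big1 ?addr0 // => g' /andP [g'L /eqP e].
by move: (src_not_tgt u gL g'L); rewrite e eqxx.
Qed.

Lemma ceps_rev n (C : seq (seq (gate n))) q : (q \in ceps (rev C)) = (q \in ceps C).
Proof. by rewrite /ceps map_rev; apply/flattenP/flattenP => [] [s]; rewrite ?mem_rev => ??; exists s; rewrite ?mem_rev. Qed.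

Lemma validc_rev n (C : seq (seq (gate n))) : validc (rev C) = validc C.
Proof. by rewrite /validc all_rev. Qed.

Lemma sem_rev n (C : seq (seq (gate n))) x : validc C -> sem (rev C) (sem C x) = x.
Proof.
elim: C x => //= L C IH x /andP [uL vC].
by rewrite rev_cons -cats1 sem_cat IH //= LS_invol.
Qed.

Lemma sum_iota1 K m (F : nat -> 'F_2) (P : pred nat) :
  (forall k, (k < K)%N -> P k = (k == m)) ->
  \sum_(k <- iota 0 K | P k) F k = if (m < K)%N then F m else 0.
Proof.
elim: K => [|K IH] hP; first by rewrite big_nil.
rewrite (_ : iota 0 K.+1 = iota 0 K ++ [:: K]); last by rewrite -addn1 iotaD.
rewrite big_cat /= big_cons big_nil IH; last by move=> k kK; apply: hP; lia.
rewrite hP; last lia.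
case: (ltngtP m K) => h.
- rewrite (_ : (m < K.+1)%N) ?h; last lia.
  by rewrite addr0.
- rewrite (_ : (m < K.+1)%N = false); last lia.
  by rewrite addr0.
- by rewrite h ltnSn add0r addr0.
Qed.

Definition injL n L (a : nat -> 'I_n) := forall i j, (i < L)%N -> (j < L)%N -> a i = a j -> i = j.

Definition layer n (a : nat -> 'I_n) c K : seq (gate n) :=
  [seq (a (c + k * 2)%N, a (c + k * 2 + 1)%N) | k <- iota 0 K].

Fixpoint ps n e L (a : nat -> 'I_n) : seq (seq (gate n)) :=
  match e with
  | 0 => [::]
  | e'.+1 => if (L <= 1)%N then [::] else
      layer a 0 (L %/ 2)%N :: ps e' (L %/ 2)%N (fun k => a (k * 2 + 1)%N) ++ [:: layer a 1 ((L - 1) %/ 2)%N]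
  end.

Lemma eps_layer n (a : nat -> 'I_n) c K : eps (layer a c K) = [seq a i | i <- iota c (K * 2)].
Proof.
elim: K => [|K IH] //.
rewrite /layer (_ : iota 0 K.+1 = iota 0 K ++ [:: K]); last by rewrite -addn1 iotaD.
rewrite map_cat -/(layer a c K) eps_cat IH.
rewrite (_ : (K.+1 * 2 = K * 2 + 2)%N) ?iotaD ?map_cat; last lia.
by rewrite /= /eps /= addn1.
Qed.

Lemma size_ps n e L (a : nat -> 'I_n) : (size (ps e L a) <= e.*2)%N.
Proof.
elim: e L a => //= e IH L a; case: (L <= 1)%N => //=.
rewrite size_cat /= addn1 doubleS ltnS; apply: leq_trans (IH _ _) _; lia.
Qed.

Lemma ceps_ps n e L (a : nat -> 'I_n) q : q \in ceps (ps e L a) -> exists2 i, (i < L)%N & q = a i.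
Proof.
elim: e L a => //= e IH L a; case: (L <= 1)%N => //.
rewrite ceps_cons ceps_cat ceps1 !mem_cat.
rewrite !eps_layer => /or3P [| /IH [i iL ->] |] .
- by case/mapP => i; rewrite mem_iota => ? ->; exists i => //; lia.
- exists (i * 2 + 1)%N => //; lia.
- by case/mapP => i; rewrite mem_iota => ? ->; exists i => //; lia.
Qed.

Lemma uniq_layer n (a : nat -> 'I_n) c K L : injL L a -> (c + K * 2 <= L)%N -> uniq (eps (layer a c K)).
Proof.
move=> ia cK; rewrite eps_layer map_inj_in_uniq ?iota_uniq // => i j.
rewrite !mem_iota => ? ?; apply: ia; lia.
Qed.

Lemma valid_ps n e L (a : nat -> 'I_n) : injL L a -> validc (ps e L a).
Proof.
elim: e L a => //= e IH L a ia; case: (leqP L 1) => //= L1.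
rewrite /validc /= all_cat /= -/(validc _) IH.
- rewrite (@uniq_layer _ a 0 (L %/ 2)%N L) ?(@uniq_layer _ a 1 ((L - 1) %/ 2)%N L) //; lia.
- move=> i j ? ? /ia h; have : (i * 2 + 1 = j * 2 + 1)%N by apply: h; lia.
  lia.
Qed.

Lemma LS_layer_at n (a : nat -> 'I_n) c K L x i : injL L a -> (c + K * 2 <= L)%N -> (i < L)%N ->
  LS (layer a c K) x (a i) = x (a i) + \sum_(k <- iota 0 K | (c + k * 2 + 1 == i)%N) x (a (c + k * 2)%N).
Proof.
move=> ia cK iL; rewrite ffunE big_map; congr (_ + _).
rewrite big_seq_cond [in RHS]big_seq_cond; apply: eq_bigl => k /=.
case kK: (k \in iota 0 K) => //=; move: kK; rewrite mem_iota => kK.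
apply/eqP/eqP => [/ia | ->] //; apply; lia.
Qed.

Lemma LS_layer_out n (a : nat -> 'I_n) c K L x q : (c + K * 2 <= L)%N ->
  (forall i, (i < L)%N -> a i != q) -> LS (layer a c K) x q = x q.
Proof.
move=> cK hq; rewrite ffunE big_map big_seq_cond big1 ?addr0 // => k /andP [].
rewrite mem_iota => kK /= /eqP e; move: (hq (c + k * 2 + 1)%N); rewrite e eqxx; move=> h.
have : (c + k * 2 + 1 < L)%N by lia.
by move/h.
Qed.

Lemma pairsum (F : nat -> 'F_2) m :
  \sum_(j < m) (F (j * 2 + 1)%N + F (j * 2)%N) = \sum_(j < m * 2) F j.
Proof.
elim: m => [|m IH]; first by rewrite !big_ord0.
rewrite big_ord_recr /= IH (_ : (m.+1 * 2 = (m * 2).+2)%N); last lia.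
by rewrite !big_ord_recr /= addn1 -addrA [F _ + F _]addrC.
Qed.


Lemma ps_out n e L (a : nat -> 'I_n) x q : (forall i, (i < L)%N -> a i != q) ->
  sem (ps e L a) x q = x q.
Proof.
move=> hq; case: (sem_supp (ps e L a)) => h _; apply: h.
apply/negP => /ceps_ps [i iL e']; by move: (hq i iL); rewrite e' eqxx.
Qed.

Lemma ps_spec n e L (a : nat -> 'I_n) x : (L <= 2 ^ e)%N -> injL L a ->
  forall i, (i < L)%N -> sem (ps e L a) x (a i) = \sum_(j < i.+1) x (a j).
Proof.
elim: e L a x => [|e IH] L a x /= Le ia i iL.
  have -> : i = 0%N by move: Le; rewrite expn0; lia.
  by rewrite big_ord1.
case: (leqP L 1) => L1.
  have -> : i = 0%N by lia.
  by rewrite big_ord1.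
rewrite sem_cons sem_cat /=.
set y := LS (layer a 0 (L %/ 2)) x.
set a' := fun k => a (k * 2 + 1)%N.
set z := sem (ps e (L %/ 2) a') y.
have cK0 : (0 + (L %/ 2) * 2 <= L)%N by lia.
have cK1 : (1 + ((L - 1) %/ 2) * 2 <= L)%N by lia.
have hy_odd : forall m, (m < L %/ 2)%N -> y (a (m * 2 + 1)%N) = x (a (m * 2 + 1)%N) + x (a (m * 2)%N).
  move=> m mK; rewrite /y (@LS_layer_at _ a 0 (L %/ 2) L x _ ia cK0); last lia.
  rewrite (@sum_iota1 _ m); last by move=> k kK; apply/eqP/eqP; lia.
  by rewrite mK add0n.
have hy_even : forall m, (m * 2 < L)%N -> y (a (m * 2)%N) = x (a (m * 2)%N).
  move=> m mL; rewrite /y (@LS_layer_at _ a 0 (L %/ 2) L x _ ia cK0) //.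
  rewrite (@sum_iota1 _ (L %/ 2)%N); last by move=> k kK; apply/eqP; case: eqP; lia.
  by rewrite ltnn addr0.
have ia' : injL (L %/ 2) a'.
  move=> i1 j1 ? ? /ia h; have : (i1 * 2 + 1 = j1 * 2 + 1)%N by apply: h; lia.
  lia.
have hz : forall m, (m < L %/ 2)%N -> z (a' m) = \sum_(j < m.+1) y (a' j).
  move=> m mK; apply: IH => //; move: Le; rewrite expnS; lia.
have hz_even : forall m, (m * 2 < L)%N -> z (a (m * 2)%N) = y (a (m * 2)%N).
  move=> m mL; rewrite /z ps_out // => j jK; apply/eqP => /ia h.
  have : (j * 2 + 1 = m * 2)%N by apply: h; lia.
  lia.
have hsum : forall m, (m <= L %/ 2)%N -> \sum_(j < m) y (a' j) = \sum_(j < m * 2) x (a j).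
  move=> m mK; rewrite -(pairsum (fun j => x (a j))); apply: eq_bigr => j _; rewrite /a' hy_odd //.
  by move: (ltn_ord j); lia.
have [m [ei | ei]] : exists m, i = (m * 2)%N \/ i = (m * 2 + 1)%N by exists (i %/ 2)%N; lia.
- rewrite ei (@LS_layer_at _ a 1 ((L - 1) %/ 2) L z _ ia cK1); last lia.
  case: m ei => [|m] ei.
    rewrite (@sum_iota1 _ ((L - 1) %/ 2)%N); last by move=> k kK; apply/eqP; case: eqP; lia.
    rewrite ltnn addr0 hz_even; last lia.
    rewrite hy_even; last lia.
    by rewrite mul0n big_ord1.
  rewrite (@sum_iota1 _ m); last by move=> k kK; apply/eqP/eqP; lia.
  have -> : (m < (L - 1) %/ 2)%N by lia.
  rewrite hz_even; last lia.
  rewrite hy_even; last lia.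
  rewrite (_ : (1 + m * 2)%N = (m * 2 + 1)%N); last lia.
  rewrite -/(a' m) hz; last lia.
  rewrite hsum; last lia.
  by rewrite [RHS]big_ord_recr /= addrC.
- rewrite ei (@LS_layer_at _ a 1 ((L - 1) %/ 2) L z _ ia cK1); last lia.
  rewrite (@sum_iota1 _ ((L - 1) %/ 2)%N); last by move=> k kK; apply/eqP; case: eqP; lia.
  rewrite ltnn addr0 -/(a' m) hz; last lia.
  rewrite hsum; last lia.
  by rewrite (_ : ((m * 2 + 1).+1 = m.+1 * 2)%N); last lia.
Qed.


Definition PSspec n (l : seq 'I_n) (x : vec n) : vec n :=
  [ffun q => if q \in l then \sum_(y <- take (index q l).+1 l) x y else x q].

Definition psl n e (l : seq 'I_n) : seq (seq (gate n)) :=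
  if l is d :: _ then ps e (size l) (nth d l) else [::].

Lemma sum_take n (x : vec n) (l : seq 'I_n) d k : (k <= size l)%N ->
  \sum_(y <- take k l) x y = \sum_(j < k) x (nth d l j).
Proof.
move=> kl; rewrite (big_nth d) size_take.
have -> : (if (k < size l)%N then k else size l) = k by case: ltnP => //; lia.
rewrite big_mkord; apply: eq_bigr => j _; by rewrite nth_take.
Qed.

Lemma injL_nth n (l : seq 'I_n) d : uniq l -> injL (size l) (nth d l).
Proof. by move=> u i j il jl /eqP; rewrite nth_uniq // => /eqP. Qed.

Lemma psl_sem n e (l : seq 'I_n) x : uniq l -> (size l <= 2 ^ e)%N -> sem (psl e l) x = PSspec l x.
Proof.
case: l => [|d l'] u sl; first by apply/ffunP => q; rewrite ffunE.
rewrite [psl _ _]/psl; set l := d :: l' in u sl *.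
apply/ffunP => q; rewrite ffunE.
case: ifP => ql.
  have il : (index q l < size l)%N by rewrite index_mem.
  rewrite -{1}(nth_index d ql) ps_spec //; last exact: injL_nth.
  by rewrite (@sum_take _ x l d (index q l).+1) //.
rewrite ps_out // => i il; apply/eqP => e'; by move: ql; rewrite -e' mem_nth.
Qed.

Lemma psl_valid n e (l : seq 'I_n) : uniq l -> validc (psl e l).
Proof. case: l => // d l' u; apply: valid_ps; exact: injL_nth. Qed.

Lemma psl_ceps n e (l : seq 'I_n) q : q \in ceps (psl e l) -> q \in l.
Proof. case: l => // d l' /ceps_ps [i il ->]; exact: mem_nth. Qed.

Lemma size_psl n e (l : seq 'I_n) : (size (psl e l) <= e.*2)%N.
Proof. case: l => //= d l'; exact: size_ps. Qed.

Lemma PSspec_rcons n (s : seq 'I_n) a y q : uniq (rcons s a) ->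
  PSspec (rcons s a) y q = if q == a then \sum_(z <- rcons s a) y z else PSspec s y q.
Proof.
rewrite rcons_uniq => /andP [as_ us]; rewrite !ffunE mem_rcons inE.
case: eqP => [-> | qa] /=.
  by rewrite take_oversize // -cats1 size_cat index_cat (negbTE as_) /= eqxx addn0 addn1.
case: ifP => // qs; rewrite -cats1 index_cat qs take_cat.
case: ltnP => // h.
have e : (index q s).+1 = size s by apply/eqP; rewrite -index_mem in qs; rewrite eqn_leq qs h.
by rewrite e subnn take0 cats0 take_size.
Qed.

Definition bsum n (x : vec n) (b : 'I_n * seq 'I_n) := x b.1 + \sum_(m <- b.2) x m.

Definition fanin_spec n (b : 'I_n * seq 'I_n) (x : vec n) : vec n :=
  [ffun q => if q == b.1 then bsum x b else x q].

Definition fanin n e (b : 'I_n * seq 'I_n) := psl e (rcons b.2 b.1) ++ rev (psl e b.2).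

Lemma sum_rcons n (x : vec n) s a : \sum_(z <- rcons s a) x z = \sum_(z <- s) x z + x a.
Proof. by rewrite -cats1 big_cat big_seq1. Qed.

Lemma fanin_sem n e (b : 'I_n * seq 'I_n) x : uniq (b.1 :: b.2) -> (size b.2 < 2 ^ e)%N ->
  sem (fanin e b) x = fanin_spec b x.
Proof.
case: b => h M /= /andP [hM uM] sM; rewrite /fanin /= sem_cat.
have u' : uniq (rcons M h) by rewrite rcons_uniq hM.
rewrite psl_sem ?size_rcons //.
have [s1 s2] := sem_supp (rev (psl e M)).
have sub : {subset ceps (rev (psl e M)) <= M} by move=> q; rewrite ceps_rev => /psl_ceps.
have [t1 t2] := supp_mono (sem_supp (rev (psl e M))) sub.
apply/ffunP => q; rewrite ffunE /=.
case: (boolP (q \in M)) => qM.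
  have qh : q != h by apply/eqP => e'; move: hM; rewrite -e' qM.
  rewrite (negbTE qh).
  rewrite (t2 _ (PSspec M x)) //.
    by rewrite -(@psl_sem _ e) ?sem_rev ?psl_valid //; apply: leq_trans (ltnW sM).
  by move=> r rM; rewrite PSspec_rcons // (_ : (r == h) = false) //; apply/eqP => e'; move: hM; rewrite -e' rM.
rewrite t1 // PSspec_rcons //.
case: ifP => [/eqP qh | qh]; first by subst q; rewrite sum_rcons /bsum addrC.
by rewrite ffunE (negbTE qM).
Qed.

Lemma fanin_valid n e (b : 'I_n * seq 'I_n) : uniq (b.1 :: b.2) -> validc (fanin e b).
Proof.
case: b => h M /= /andP [hM uM]; rewrite /fanin /validc all_cat -!/(validc _) validc_rev.
by rewrite !psl_valid // rcons_uniq hM.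
Qed.

Lemma fanin_ceps n e (b : 'I_n * seq 'I_n) q : q \in ceps (fanin e b) -> q \in b.1 :: b.2.
Proof.
case: b => h M; rewrite /fanin ceps_cat mem_cat ceps_rev => /orP [] /psl_ceps.
  by rewrite mem_rcons.
by move=> qM; rewrite inE qM orbT.
Qed.

Lemma size_fanin n e (b : 'I_n * seq 'I_n) : (size (fanin e b) <= e.*2.*2)%N.
Proof. rewrite /fanin size_cat size_rev; have := size_psl e (rcons b.2 b.1); have := size_psl e b.2; lia. Qed.


Definition block n := ('I_n * seq 'I_n)%type.
Definition blq n (br : seq (block n)) : seq 'I_n := flatten [seq b.1 :: b.2 | b <- br].
Definition heads n (br : seq (block n)) : seq 'I_n := map fst br.

Lemma blq_cons n (b : block n) br : blq (b :: br) = b.1 :: b.2 ++ blq br.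
Proof. by []. Qed.

Fixpoint blockspec n (br : seq (block n)) (x : vec n) : vec n :=
  match br with
  | [::] => x
  | b :: br' => [ffun q => if q == b.1 then \sum_(c <- br) bsum x c else blockspec br' x q]
  end.

Fixpoint fanall n (br : seq (block n)) (x : vec n) : vec n :=
  match br with
  | [::] => x
  | b :: br' => [ffun q => if q == b.1 then bsum x b else fanall br' x q]
  end.

Definition chainc n e (br : seq (block n)) :=
  foldr (fun b acc => zipc (fanin e b) acc) [::] br ++ psl e (rev (heads br)).

Lemma heads_blq n (br : seq (block n)) q : q \in heads br -> q \in blq br.
Proof.
elim: br => // b br IH; rewrite /heads /= -/(heads br) inE blq_cons inE mem_cat => /orP [-> // | /IH ->].
by rewrite !orbT.
Qed.

Lemma uniq_heads n (br : seq (block n)) : uniq (blq br) -> uniq (heads br).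
Proof.
elim: br => // b br IH; rewrite blq_cons /heads /= -/(heads br) cat_uniq => /andP [hb /and3P [_ _ u]].
rewrite IH // andbT; apply/negP => /heads_blq h; by move: hb; rewrite mem_cat h orbT.
Qed.

Lemma bsum_ext n (x y : vec n) b : (forall q, q \in b.1 :: b.2 -> x q = y q) -> bsum x b = bsum y b.
Proof.
move=> e; rewrite /bsum e ?inE ?eqxx //; congr (_ + _).
rewrite big_seq [in RHS]big_seq; apply: eq_bigr => q qb; apply: e; by rewrite inE qb orbT.
Qed.

Lemma fanall_supp n (br : seq (block n)) : supp_on (fanall br) (blq br).
Proof.
elim: br => [|b br [IH1 IH2]]; first exact: supp_id.
split.
  move=> x q; rewrite blq_cons inE mem_cat negb_or => /andP [qb /norP [_ qr]].
  by rewrite ffunE (negbTE qb) IH1.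
move=> x y e q qS; rewrite !ffunE; case: ifP => _.
  apply: bsum_ext => r rb; apply: e; by rewrite blq_cons -cat_cons mem_cat rb.
case: (boolP (q \in blq br)) => qr.
  apply: IH2 => // r rr; apply: e; by rewrite blq_cons inE mem_cat rr !orbT.
by rewrite !IH1 // e.
Qed.

Lemma blockspec_supp n (br : seq (block n)) : supp_on (blockspec br) (blq br).
Proof.
elim: br => [|b br [IH1 IH2]]; first exact: supp_id.
split.
  move=> x q; rewrite blq_cons inE mem_cat negb_or => /andP [qb /norP [_ qr]].
  by rewrite ffunE (negbTE qb) IH1.
move=> x y e q qS; rewrite !ffunE; case: ifP => _.
  rewrite big_seq [in RHS]big_seq; apply: eq_bigr => c cb; apply: bsum_ext => r rc; apply: e.
  apply/flattenP; exists (c.1 :: c.2) => //; apply/mapP; by exists c.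
case: (boolP (q \in blq br)) => qr.
  apply: IH2 => // r rr; apply: e; by rewrite blq_cons inE mem_cat rr !orbT.
by rewrite !IH1 // e.
Qed.

Lemma fanall_head n (br : seq (block n)) x c : uniq (heads br) -> c \in br -> fanall br x c.1 = bsum x c.
Proof.
elim: br => //= b br IH /andP [bh uh]; rewrite inE => /orP [/eqP -> | cb].
  by rewrite ffunE eqxx.
rewrite ffunE; case: ifP => [/eqP e | _]; last exact: IH.
by move: bh; rewrite -e; case/negP; apply/mapP; exists c.
Qed.

Lemma PSspec_ext n (s : seq 'I_n) (y y' : vec n) q : (forall z, z \in s -> y z = y' z) -> y q = y' q ->
  PSspec s y q = PSspec s y' q.
Proof.
move=> e eq; rewrite !ffunE; case: ifP => // qs.
rewrite big_seq [in RHS]big_seq; apply: eq_bigr => z zs; apply: e; exact: mem_take zs.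
Qed.

Lemma blockspec_chain n (br : seq (block n)) x : uniq (blq br) ->
  blockspec br x = PSspec (rev (heads br)) (fanall br x).
Proof.
elim: br x => [|b br IH] x u.
  by apply/ffunP => q; rewrite !ffunE.
have uh := uniq_heads u.
move: (uh) => /= /andP [bh uh'].
move: u; rewrite blq_cons cons_uniq cat_uniq => /andP [_ /and3P [_ _ ubr]].
apply/ffunP => q; rewrite /heads /= rev_cons PSspec_rcons; last by rewrite rcons_uniq mem_rev bh rev_uniq.
rewrite ffunE; case: ifP => [/eqP qb | qb].
  rewrite sum_rcons big_cons addrC ffunE eqxx; congr (_ + _).
  rewrite big_rev big_map big_seq [in RHS]big_seq; apply: eq_bigr => c cb.
  rewrite ffunE (_ : (c.1 == b.1) = false); first by rewrite fanall_head.
  by apply/eqP => e; move: bh; rewrite -e; case/negP; apply/mapP; exists c.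
rewrite IH //; apply: PSspec_ext.
  move=> z; rewrite mem_rev => zh; rewrite ffunE (_ : (z == b.1) = false) //.
  by apply/eqP => e; move: bh; rewrite -e zh.
by rewrite ffunE qb.
Qed.

Definition fanc n e (br : seq (block n)) := foldr (fun b acc => zipc (fanin e b) acc) [::] br.

Lemma fanc_ceps n e (br : seq (block n)) q : q \in ceps (fanc e br) -> q \in blq br.
Proof.
elim: br => //= b br IH; rewrite ceps_zipc blq_cons => /orP [/fanin_ceps | /IH].
  by rewrite -cat_cons mem_cat => ->.
by rewrite -cat_cons mem_cat => ->; rewrite orbT.
Qed.

Lemma fanc_disj n e (b : block n) br : uniq (blq (b :: br)) -> disj (ceps (fanin e b)) (ceps (fanc e br)).
Proof.
rewrite blq_cons -cat_cons cat_uniq => /and3P [_ h _] q /fanin_ceps qb.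
apply/negP => /fanc_ceps qr; case/hasP: h; by exists q.
Qed.

Lemma fanc_sem n e (br : seq (block n)) x : uniq (blq br) -> (size (blq br) <= 2 ^ e)%N ->
  sem (fanc e br) x = fanall br x.
Proof.
elim: br x => [|b br IH] x u sz //=.
rewrite zipc_sem; last exact: fanc_disj.
move: (u) (sz); rewrite blq_cons -cat_cons cat_uniq size_cat => /and3P [ub hb ubr] sz'.
rewrite IH //; last by apply: leq_trans sz; rewrite blq_cons /= size_cat; lia.
rewrite fanin_sem //; last by apply: leq_trans sz; rewrite blq_cons /= size_cat; lia.
apply/ffunP => q; rewrite ffunE.
case: ifP => [/eqP qb | qb].
  subst q; case: (fanall_supp br) => h _; rewrite h; first by rewrite ffunE eqxx.
  apply/negP => bb; case/hasP: hb; exists b.1 => //; by rewrite inE eqxx.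
case: (fanall_supp br) => h1 h2.
case: (boolP (q \in blq br)) => qr.
  apply: h2 => // r rr; rewrite ffunE; case: ifP => // /eqP rb.
  subst r; case/hasP: hb; exists b.1 => //; by rewrite inE eqxx.
by rewrite !h1 // ffunE qb.
Qed.

Lemma fanc_valid n e (br : seq (block n)) : uniq (blq br) -> validc (fanc e br).
Proof.
elim: br => // b br IH u.
have [u1 _ u3] : [/\ uniq (b.1 :: b.2), true & uniq (blq br)].
  by move: u; rewrite blq_cons -cat_cons cat_uniq => /and3P [].
apply: zipc_valid; last exact: fanc_disj.
  exact: fanin_valid.
exact: IH.
Qed.

Lemma size_fanc n e (br : seq (block n)) : (size (fanc e br) <= e.*2.*2)%N.
Proof.
elim: br => //= b br IH; rewrite size_zipc geq_max IH andbT; exact: size_fanin.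
Qed.

Lemma chain_sem n e (br : seq (block n)) x : uniq (blq br) -> (size (blq br) <= 2 ^ e)%N ->
  sem (chainc e br) x = blockspec br x.
Proof.
move=> u sz; rewrite /chainc sem_cat -/(fanc e br) fanc_sem // psl_sem.
- by rewrite blockspec_chain.
- by rewrite rev_uniq uniq_heads.
rewrite size_rev; apply: leq_trans sz; apply: uniq_leq_size; first exact: uniq_heads.
exact: heads_blq.
Qed.

Lemma chain_valid n e (br : seq (block n)) : uniq (blq br) -> validc (chainc e br).
Proof.
move=> u; rewrite /chainc /validc all_cat -/(fanc e br) -!/(validc _) fanc_valid //.
by rewrite psl_valid // rev_uniq uniq_heads.
Qed.

Lemma chain_ceps n e (br : seq (block n)) q : q \in ceps (chainc e br) -> q \in blq br.
Proof.
rewrite /chainc ceps_cat mem_cat -/(fanc e br) => /orP [/fanc_ceps // | /psl_ceps].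
by rewrite mem_rev => /heads_blq.
Qed.

Lemma size_chain n e (br : seq (block n)) : (size (chainc e br) <= e * 6)%N.
Proof.
rewrite /chainc size_cat -/(fanc e br); have := size_fanc e br; have := size_psl e (rev (heads br)).
lia.
Qed.


Fixpoint tsem n (t : tree n) (x : vec n) : vec n :=
  match t with
  | Leaf _ => x
  | Node LabL a b => LS [:: (qidx b, qidx a)] (tsem b (tsem a x))
  | Node LabR a b => LS [:: (qidx a, qidx b)] (tsem b (tsem a x))
  end.

Lemma qidx_leaves n (t : tree n) : qidx t \in leaves t.
Proof.
elim: t => [l | [] a IHa b IHb] /=; rewrite ?inE // mem_cat ?IHa ?IHb ?orbT //.
Qed.

Lemma LS1_supp n (g : gate n) S : g.1 \in S -> g.2 \in S -> supp_on (LS [:: g]) S.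
Proof.
move=> h1 h2; apply: supp_mono (LS_supp _) _ => q; rewrite /eps /= !inE.
by case/orP => /eqP ->.
Qed.

Lemma tsem_supp n (t : tree n) : supp_on (tsem t) (leaves t).
Proof.
elim: t => [l | lab a IHa b IHb]; first exact: supp_id.
have sa : supp_on (tsem a) (leaves (Node lab a b)).
  by apply: supp_mono IHa _ => q; rewrite /= mem_cat => ->.
have sb : supp_on (tsem b) (leaves (Node lab a b)).
  by apply: supp_mono IHb _ => q; rewrite /= mem_cat => ->; rewrite orbT.
have qa : qidx a \in leaves (Node lab a b) by rewrite /= mem_cat qidx_leaves.
have qb : qidx b \in leaves (Node lab a b) by rewrite /= mem_cat qidx_leaves orbT.
case: lab sa sb qa qb => sa sb qa qb /=;
  (apply: (@supp_comp _ (LS _) (fun x => tsem b (tsem a x))); [apply: LS1_supp => // | exact: supp_comp]).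
Qed.

Definition semP n (offs : seq (tree n)) (x : vec n) : vec n := foldr (fun u y => tsem u y) x offs.

Definition addmem n (z : 'I_n) (br : seq (block n)) : seq (block n) :=
  match br with (h, M) :: r => (h, z :: M) :: r | [::] => [::] end.

Fixpoint hp n (t : tree n) : seq (tree n) * seq (block n) :=
  match t with
  | Leaf l => ([::], [:: (l, [::])])
  | Node lab a b =>
    let ra := hp a in let rb := hp b in
    let hl := (size (leaves b) <= size (leaves a))%N in
    let r := if hl then ra else rb in
    let lt := if hl then b else a in
    let wh := match lab with LabL => hl | LabR => ~~ hl end in
    if wh then (lt :: r.1, addmem (qidx lt) r.2)
    else (lt :: r.1, (qidx lt, [::]) :: r.2)
  end.

Definition hp_inv n (t : tree n) (offs : seq (tree n)) (br : seq (block n)) :=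
  [/\ forall x, tsem t x = blockspec br (semP offs x),
      uniq (blq br) /\ {subset blq br <= leaves t},
      uniq (flatten (map (@leaves n) offs)) /\ {subset flatten (map (@leaves n) offs) <= leaves t},
      all (fun u : tree n => (size (leaves u)).*2 <= size (leaves t))%N offs
    & exists M r, br = (qidx t, M) :: r].

Lemma bs_member n h M r (z : 'I_n) y : z \notin blq ((h, M) :: r) ->
  LS [:: (z, h)] (blockspec ((h, M) :: r) y) = blockspec ((h, z :: M) :: r) y.
Proof.
move=> zn; apply/ffunP => q; rewrite ffunE big_mkcond big_seq1 /=.
have -> : blockspec ((h, M) :: r) y z = y z by case: (blockspec_supp ((h, M) :: r)) => f _; apply: f.
case: (h =P q) => [<- | hq].
  rewrite !ffunE eqxx !big_cons /bsum /= big_cons; ring.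
by rewrite addr0 !ffunE (_ : (q == h) = false) //; apply/eqP => e; apply: hq.
Qed.

Lemma bs_newhead n h M r (z : 'I_n) y : z \notin blq ((h, M) :: r) ->
  LS [:: (h, z)] (blockspec ((h, M) :: r) y) = blockspec ((z, [::]) :: (h, M) :: r) y.
Proof.
move=> zn; apply/ffunP => q; rewrite ffunE big_mkcond big_seq1 /=.
have yz : blockspec ((h, M) :: r) y z = y z by case: (blockspec_supp ((h, M) :: r)) => f _; apply: f.
case: (z =P q) => [<- | zq].
  rewrite yz !ffunE !eqxx !big_cons /bsum /= big_nil addr0; ring.
by rewrite addr0 [in RHS]ffunE (_ : (q == z) = false) //; apply/eqP => e; apply: zq.
Qed.

Lemma hp_step n (t hv lt : tree n) offs br (wh : bool) :
  hp_inv hv offs br -> uniq (leaves lt) -> disj (leaves hv) (leaves lt) ->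
  {subset leaves hv <= leaves t} -> {subset leaves lt <= leaves t} ->
  size (leaves t) = (size (leaves hv) + size (leaves lt))%N ->
  (size (leaves lt) <= size (leaves hv))%N ->
  (forall x, tsem t x = LS [:: if wh then (qidx lt, qidx hv) else (qidx hv, qidx lt)] (tsem lt (tsem hv x))) ->
  qidx t = (if wh then qidx hv else qidx lt) ->
  hp_inv t (lt :: offs) (if wh then addmem (qidx lt) br else (qidx lt, [::]) :: br).
Proof.
case=> I1 [I2u I2s] [I3u I3s] I4 [M [r ebr]] ul D st slt sz szl ht qt.
have zn : qidx lt \notin blq br.
  apply/negP => /I2s zh; move: (D _ zh); by rewrite qidx_leaves.
have Dl : disj (leaves lt) (blq br).
  move=> q ql; apply/negP => /I2s qh; move: (D _ qh); by rewrite ql.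
split.
- move=> x; rewrite ht I1 /=.
  rewrite (@supp_comm _ (tsem lt) (blockspec br) (leaves lt) (blq br)) //; last first.
    exact: blockspec_supp.
    exact: tsem_supp.
  move: zn; rewrite ebr; case: wh ht qt => _ _ zn.
    by rewrite /= bs_member.
  by rewrite bs_newhead.
- move: zn I2u I2s; rewrite ebr; case: wh ht qt => _ _ zn I2u I2s.
    move: zn I2u; rewrite /addmem !blq_cons /= !inE !negb_or => /andP [zh zr] /andP [hr ->].
    rewrite zr hr andbT; split.
      by rewrite eq_sym zh.
    move=> q; rewrite !inE => /or3P [/eqP -> | /eqP -> | qr].
    + apply: st; apply: I2s; by rewrite blq_cons inE eqxx.
    + apply: slt; exact: qidx_leaves.
    + apply: st; apply: I2s; by rewrite blq_cons inE qr orbT.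
  rewrite blq_cons cat0s cons_uniq zn I2u; split => // q; rewrite inE => /orP [/eqP -> | qb].
    apply: slt; exact: qidx_leaves.
  by apply: st; apply: I2s.
- rewrite /= cat_uniq ul I3u andbT; split.
    apply/hasPn => q /I3s qh; apply/negP => ql; move: (D _ qh); by rewrite ql.
  move=> q; rewrite mem_cat => /orP [/slt // | /I3s /st //].
- rewrite /= sz; apply/andP; split; first lia.
  apply: sub_all I4 => u; lia.
- move: ebr qt; case: wh ht => _ -> ->.
    by exists (qidx lt :: M), r.
  by exists [::], ((qidx hv, M) :: r).
Qed.

Lemma hp_spec n (t : tree n) : uniq (leaves t) -> hp_inv t (hp t).1 (hp t).2.
Proof.
elim: t => [l | lab a IHa b IHb] u.
  split => //=.
  - move=> x; apply/ffunP => q; rewrite !ffunE; case: ifP => [/eqP e | _] //.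
    by subst q; rewrite big_cons big_nil /bsum big_nil !addr0.
  - by split => // q; rewrite /blq /= !inE.
  - by exists [::], [::].
move: (u); rewrite /= cat_uniq => /and3P [ua hab ub].
have D : disj (leaves a) (leaves b).
  move=> q qa; apply/negP => qb; case/hasP: hab; by exists q.
have D' : disj (leaves b) (leaves a).
  move=> q qb; apply/negP => qa; case/hasP: hab; by exists q.
have sa : {subset leaves a <= leaves (Node lab a b)} by move=> q; rewrite /= mem_cat => ->.
have sb : {subset leaves b <= leaves (Node lab a b)} by move=> q; rewrite /= mem_cat => ->; rewrite orbT.
have sz : size (leaves (Node lab a b)) = (size (leaves a) + size (leaves b))%N by rewrite /= size_cat.
have cab : forall x, tsem b (tsem a x) = tsem a (tsem b x).
  move=> x; apply: supp_comm; [exact: tsem_supp | exact: tsem_supp | exact: D'].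
case hl : (size (leaves b) <= size (leaves a))%N.
  rewrite /=.
  have := @hp_step n (Node lab a b) a b (hp a).1 (hp a).2 (match lab with LabL => true | LabR => false end)
    (IHa ua) ub D sa sb sz hl => h.
  clear u; case: lab h sa sb sz => h _ _ _ /=; apply: h => //.
rewrite /=.
have hl' : (size (leaves a) <= size (leaves b))%N by move: hl; lia.
have := @hp_step n (Node lab a b) b a (hp b).1 (hp b).2 (match lab with LabL => false | LabR => true end)
  (IHb ub) ua D' sb sa (etrans sz (addnC _ _)) hl' => h.
clear u; case: lab h sa sb sz => h _ _ _ /=; apply: h => // x; by rewrite /= cab.
Qed.


Definition circ_ok n (t : tree n) (B : nat) (C : seq (seq (gate n))) :=
  [/\ validc C, {subset ceps C <= leaves t}, (size C <= B)%N & forall x, sem C x = tsem t x].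

Lemma par_offs n e B (offs : seq (tree n)) :
  (forall t : tree n, uniq (leaves t) -> (size (leaves t) <= 2 ^ e)%N -> exists C, circ_ok t B C) ->
  uniq (flatten (map (@leaves n) offs)) -> all (fun u : tree n => size (leaves u) <= 2 ^ e)%N offs ->
  exists C, [/\ validc C, {subset ceps C <= flatten (map (@leaves n) offs)}, (size C <= B)%N
             & forall x, sem C x = semP offs x].
Proof.
move=> IH; elim: offs => [|u us IHs] /=.
  by move=> _ _; exists [::]; split.
rewrite cat_uniq => /and3P [uu hu uus] /andP [su sus].
have [Cu [v1 c1 s1 e1]] := IH u uu su.
have [Cs [v2 c2 s2 e2]] := IHs uus sus.
have D : disj (ceps Cu) (ceps Cs).
  move=> q /c1 qu; apply/negP => /c2 qs; case/hasP: hu; by exists q.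
exists (zipc Cu Cs); split.
- exact: zipc_valid.
- by move=> q; rewrite ceps_zipc mem_cat => /orP [/c1 -> | /c2 ->]; rewrite ?orbT.
- by rewrite size_zipc geq_max s1 s2.
move=> x; rewrite zipc_sem // (@supp_comm _ (sem Cs) (sem Cu) (ceps Cs) (ceps Cu)).
- by rewrite e2 e1.
- exact: sem_supp.
- exact: sem_supp.
move=> q qs; apply/negP => qu; by move: (D q qu); rewrite qs.
Qed.

Lemma size_leaves_gt0 n (t : tree n) : (0 < size (leaves t))%N.
Proof. elim: t => //= _ a IHa b _; rewrite size_cat; lia. Qed.

Lemma tree_circ n e (t : tree n) : uniq (leaves t) -> (size (leaves t) <= 2 ^ e)%N ->
  exists C, circ_ok t (e * e.+1 * 3) C.
Proof.
elim: e t => [|e IH] t u sz.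
  case: t u sz => [l | lab a b] u sz.
    by exists [::]; split.
  move: sz; rewrite /= size_cat expn0; have := size_leaves_gt0 a; have := size_leaves_gt0 b; lia.
have [I1 [I2u I2s] [I3u I3s] I4 _] := hp_spec u.
have [Cp [v1 c1 s1 e1]] : exists C, [/\ validc C, {subset ceps C <= flatten (map (@leaves n) (hp t).1)},
    (size C <= e * e.+1 * 3)%N & forall x, sem C x = semP (hp t).1 x].
  apply: (@par_offs _ e) => //.
  apply: sub_all I4 => w; move: sz; rewrite expnS; lia.
have szb : (size (blq (hp t).2) <= 2 ^ e.+1)%N.
  apply: leq_trans sz; exact: uniq_leq_size.
exists (Cp ++ chainc e.+1 (hp t).2); split.
- by rewrite /validc all_cat -!/(validc _) v1 chain_valid.
- move=> q; rewrite ceps_cat mem_cat => /orP [/c1 /I3s // | /chain_ceps /I2s //].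
- rewrite size_cat; have := size_chain e.+1 (hp t).2; move: s1; nia.
- by move=> x; rewrite sem_cat e1 chain_sem // I1.
Qed.


Definition colv n (x : vec n) : 'M['F_2]_(n, 1) := \matrix_(i, j) x i.

Definition layer_mx n (L : seq (gate n)) : 'M['F_2]_n := 1%:M + \sum_(p <- L) delta_mx p.2 p.1.

Lemma delta_colv n (a b : 'I_n) x i j : (delta_mx a b *m colv x) i j = if i == a then x b else 0.
Proof.
rewrite !mxE (bigD1 b) //= big1 => [|k kb]; rewrite !mxE.
  by rewrite eqxx andbT; case: (i == a); rewrite ?mul1r ?mul0r addr0.
by rewrite (negbTE kb) andbF mul0r.
Qed.

Lemma layer_mx_mul n (L : seq (gate n)) x : layer_mx L *m colv x = colv (LS L x).
Proof.
apply/matrixP => i j; rewrite /layer_mx mulmxDl mul1mx mulmx_suml !mxE ffunE.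
rewrite summxE; congr (_ + _); rewrite [RHS]big_mkcond; apply: eq_bigr => p _.
by rewrite delta_colv eq_sym.
Qed.

Lemma mx_ext n (A B : 'M['F_2]_n) : (forall x, A *m colv x = B *m colv x) -> A = B.
Proof.
move=> h; apply/matrixP => i j.
have := congr1 (fun M : 'M['F_2]_(n, 1) => M i ord0) (h [ffun q => (q == j)%:R]) => /=.
rewrite !mxE (bigD1 j) //= [in RHS](bigD1 j) //= !big1 => [|k kj|k kj]; rewrite ?mxE ?ffunE.
- by rewrite eqxx !mulr1 !addr0.
- by rewrite (negbTE kj) mulr0.
- by rewrite (negbTE kj) mulr0.
Qed.

Lemma Rmx_layer n (i j : 'I_n) : Rmx i j = layer_mx [:: (i, j)].
Proof. by rewrite /layer_mx big_seq1. Qed.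

Lemma tree_mx_mul n (t : tree n) x : tree_mx t *m colv x = colv (tsem t x).
Proof.
elim: t x => [l | [] a IHa b IHb] x /=; first by rewrite mul1mx.
- by rewrite -!mulmxA IHa IHb Rmx_layer layer_mx_mul.
- by rewrite -!mulmxA IHa IHb Rmx_layer layer_mx_mul.
Qed.

Lemma mxprod_cat n (s1 s2 : seq 'M['F_2]_n) : mxprod (s1 ++ s2) = mxprod s1 *m mxprod s2.
Proof. elim: s1 => [|A s1 IH] /=; by rewrite ?mul1mx // /mxprod /= -/(mxprod _) IH mulmxA. Qed.

Definition cmxs n (C : seq (seq (gate n))) := rev [seq layer_mx L | L <- C].

Lemma cmxs_mul n (C : seq (seq (gate n))) x : mxprod (cmxs C) *m colv x = colv (sem C x).
Proof.
elim: C x => [|L C IH] x; first by rewrite /= mul1mx.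
rewrite /cmxs /= rev_cons -cats1 mxprod_cat -/(cmxs C) -mulmxA /mxprod /= mulmx1.
by rewrite layer_mx_mul IH.
Qed.

Lemma cmxs_par n (C : seq (seq (gate n))) P : validc C -> P \in cmxs C -> parallel_elim P.
Proof.
move=> v; rewrite mem_rev => /mapP [L LC ->]; exists L; split => //.
by move/allP: v => /(_ L LC).
Qed.

Lemma trees_prod n B (Ts : seq (tree n)) :
  (forall t : tree n, valid_tree t -> exists C, circ_ok t B C) ->
  all (@valid_tree n) Ts ->
  exists Ps : seq 'M['F_2]_n, [/\ (forall P, P \in Ps -> parallel_elim P),
     (size Ps <= size Ts * B)%N & mxprod [seq tree_mx T | T <- Ts] = mxprod Ps].
Proof.
move=> h; elim: Ts => [|T Ts IH] /=; first by exists [::]; split.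
case/andP => vT vTs; have [Ps [p1 p2 p3]] := IH vTs.
have [C [v1 _ s1 e1]] := h T vT.
exists (cmxs C ++ Ps); split.
- by move=> P; rewrite mem_cat => /orP [/(cmxs_par v1) | /p1].
- by rewrite size_cat size_rev size_map mulSn; apply: leq_add.
rewrite mxprod_cat -p3 /mxprod /= -/(mxprod _); congr (_ *m _).
by apply: mx_ext => x; rewrite cmxs_mul tree_mx_mul e1.
Qed.


Local Close Scope ring_scope.
From Stdlib Require Import Reals Lra Psatz.


Lemma INR_exp2 k : INR (expn 2 k) = (2 ^ k)%R.
Proof. elim: k => [|k IH] //=; by rewrite expnS -multE mult_INR IH. Qed.

Lemma log_bound n : (2 <= n)%nat ->
  (INR (up_log 2 n * (up_log 2 n).+1 * 3) <= 100 * ln (INR n) ^ 2)%R.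
Proof.
move=> n2; set e := up_log 2 n.
have e1 : (1 <= e)%nat by rewrite /e up_log_gt0 n2.
have hlt : (expn 2 e.-1 < n)%nat by apply: up_log_gtn.
have L2 : (ln 2 <= ln (INR n))%R.
  have h2 : (2 <= INR n)%R by apply: (le_INR 2 n); apply/leP.
  case: (Rle_lt_or_eq_dec _ _ h2) => h; last by rewrite -h; lra.
  by apply: Rlt_le; apply: ln_increasing => //; lra.
have hl2 := ln_lt_2.
have hE : (INR e.-1 * ln 2 < ln (INR n))%R.
  rewrite -ln_pow; last lra.
  apply: ln_increasing; first by apply: pow_lt; lra.
  rewrite -(INR_exp2 e.-1); exact/lt_INR/ltP.
have eE : INR e = (INR e.-1 + 1)%R by rewrite -S_INR prednK.
rewrite !mult_INR S_INR eE.
have : (1 <= INR e)%R by rewrite (_ : 1%R = INR 1) //; apply: le_INR; apply/leP.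
rewrite eE => h1.
have hp : (0 <= INR e.-1)%R by apply: pos_INR.
have -> : INR 3 = 3%R by rewrite /=; lra.
set f := INR e.-1 in hE h1 hp *; set l := ln (INR n) in L2 hE *.
have hf : (f < 2 * l)%R by nra.
have hl : (/ 2 < l)%R by lra.
have ha : (f + 1 < 4 * l)%R by lra.
have hb : (f + 1 + 1 < 6 * l)%R by lra.
nra.
Qed.


Theorem corollary3p6 :
  exists C : R, (0 < C)%R /\
    forall (n k : nat), (2 <= n)%N -> (1 <= k)%N ->
    forall (Ts : seq (tree n)),
      size Ts = k -> all (@valid_tree n) Ts ->
      (* M = M_{T_k} ... M_{T_1}, with Ts = [:: T_k; ...; T_1] *)
      exists Ps : seq 'M['F_2]_n,
        (forall P, P \in Ps -> parallel_elim P) /\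
        (INR (size Ps) <= C * INR k * (ln (INR n)) ^ 2)%R /\
        mxprod [seq tree_mx T | T <- Ts] = mxprod Ps.
Proof.
exists 100%R; split; first lra.
move=> n k n2 k1 Ts sk vTs.
set B := (up_log 2 n * (up_log 2 n).+1 * 3)%N.
have hT : forall t : tree n, valid_tree t -> exists C, circ_ok t B C.
  move=> t; case/andP => /eqP sz u; apply: tree_circ => //; rewrite sz; exact: up_logP.
have [Ps [p1 p2 p3]] := trees_prod hT vTs.
exists Ps; split => //; split => //.
apply: Rle_trans (le_INR _ _ (elimT leP p2)) _.
rewrite mult_INR sk.
have := log_bound n2; rewrite -/B => hb.
have hk : (0 <= INR k)%R by apply: pos_INR.
nra.
Qed.
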